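(* Let $f:\mathbb{R}^d\to\mathbb{R}$ be $(p,C)$-smooth with $p=q+\beta$, $q\in\mathbb{N}_0$, $\beta\in(0,1]$, let $A\ge1$, $K\in\mathbb{N}$, and let $\delta$, $u_{\mathbf{k}}$, $I$ and $P$ be as in the context. Let $\mathbf{r}\in I$ and $x\in[u_{\mathbf{r}},u_{\mathbf{r}}+\delta\cdot\mathbf{1})$. Then $P(x)=(Tf)_{q,u_{\mathbf{r}}}(x)$.
   Context: $(p,C)$-smooth: all partial derivatives of order $q$ exist and are $\beta$-Hölder with constant $C$. For a $q$ times differentiable $g$ and $u\in\mathbb{R}^d$, $(Tg)_{q,u}(x)=\sum_{j_1+\dots+j_d\le q}\frac{1}{j_1!\cdots j_d!}\frac{\partial^{j_1+\dots+j_d}g}{\partial (x^{(1)})^{j_1}\cdots\partial (x^{(d)})^{j_d}}(u)\,(x^{(1)}-u^{(1)})^{j_1}\cdots(x^{(d)}-u^{(d)})^{j_d}$ is the Taylor polynomial of degree $q$ around $u$. Let $\delta=2A/K$, $u_k=-A+k\cdot 2A/K$ ($k=0,\dots,K-1$), $I=\{0,\dots,K-1\}^d$, $u_{\mathbf{k}}=(u_{k^{(1)}},\dots,u_{k^{(d)}})$ for $\mathbf{k}\in I$. For $\mathbf{a},\mathbf{b}\in\mathbb{R}^d$, $\mathbf{a}\le\mathbf{b}$ means $a^{(l)}\le b^{(l)}$ for all $l$, and $\mathbf{a}<\mathbf{b}$ means $\mathbf{a}\le\mathbf{b}$ and $\mathbf{a}\ne\mathbf{b}$; $[\mathbf{a},\infty)=\prod_l[a^{(l)},\infty)$,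 $[\mathbf{a},\mathbf{b})=\prod_l[a^{(l)},b^{(l)})$, $\mathbf{1}=(1,\dots,1)$. Define $P_{\mathbf{0}}=(Tf)_{q,u_{\mathbf{0}}}$ and recursively $P_{\mathbf{k}}=\big(T(f-\sum_{\mathbf{l}\in I:u_{\mathbf{l}}<u_{\mathbf{k}}}P_{\mathbf{l}})\big)_{q,u_{\mathbf{k}}}$, and $P(x)=\sum_{\mathbf{k}\in I}P_{\mathbf{k}}(x)\,1_{[u_{\mathbf{k}},\infty)}(x)$. *)

(* Defs.v *)
From HB Require Import structures.
From mathcomp Require Import all_boot all_order all_algebra.
From mathcomp Require Import all_classical all_reals all_analysis.
Unset Printing Implicit Defensive.
Import Order.TTheory GRing.Theory Num.Theory.
Import numFieldNormedType.Exports.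
Local Open Scope ring_scope.

Section Defs.
Variables (R : realType) (d : nat).

Definition evec (i : 'I_d) : 'rV[R]_d := delta_mx 0 i.

Definition pderiv (i : 'I_d) (g : 'rV[R]_d -> R) : 'rV[R]_d -> R :=
  'D_(evec i) g.

Definition pderivs (s : seq 'I_d) (g : 'rV[R]_d -> R) : 'rV[R]_d -> R :=
  foldr pderiv g s.

(* multi-index j = (j_1,...,j_d): d^{|j|} g / d(x^(1))^{j_1} ... d(x^(d))^{j_d} *)
Definition mindex_seq (j : 'I_d -> nat) : seq 'I_d :=
  flatten [seq nseq (j i) i | i <- enum 'I_d].

Definition dmulti (j : 'I_d -> nat) (g : 'rV[R]_d -> R) : 'rV[R]_d -> R :=
  pderivs (mindex_seq j) g.

Definition q_partially_derivable (q : nat) (g : 'rV[R]_d -> R) : Prop :=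
  forall s : seq 'I_d, (size s < q)%N ->
    forall (i : 'I_d) (x : 'rV[R]_d), derivable (pderivs s g) x (evec i).

Definition enorm (x : 'rV[R]_d) : R := Num.sqrt (\sum_i x 0 i ^+ 2).

Definition pC_smooth (q : nat) (beta C : R) (g : 'rV[R]_d -> R) : Prop :=
  q_partially_derivable q g /\
  forall j : 'I_d -> nat, (\sum_i j i)%N = q ->
    forall x z : 'rV[R]_d,
      `|dmulti j g x - dmulti j g z| <= C * powR (enorm (x - z)) beta.

Definition taylor (q : nat) (g : 'rV[R]_d -> R) (u : 'rV[R]_d) : 'rV[R]_d -> R :=
  fun x => \sum_(j : {ffun 'I_d -> 'I_q.+1} | (\sum_i (j i : nat) <= q)%N)
    (\prod_i ((j i)`!)%:R)^-1 * dmulti (fun i => nat_of_ord (j i)) g u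
      * \prod_i (x 0 i - u 0 i) ^+ j i.

Definition gdelta (A : R) (K : nat) : R := 2 * A / K%:R.
Definition gpt (A : R) (K : nat) (k : nat) : R := - A + k%:R * gdelta A K.
Definition gvec (A : R) (K : nat) (k : {ffun 'I_d -> 'I_K}) : 'rV[R]_d :=
  \row_i gpt A K (k i).

Definition vle (a b : 'rV[R]_d) : bool := [forall i, a 0 i <= b 0 i].
Definition vlt (a b : 'rV[R]_d) : bool := vle a b && (a != b).

Definition Pglob (A : R) (K : nat) (Pk : {ffun 'I_d -> 'I_K} -> 'rV[R]_d -> R)
  (x : 'rV[R]_d) : R :=
  \sum_(k : {ffun 'I_d -> 'I_K}) (if vle (gvec A K k) x then Pk k x else 0).

End Defs.
Arguments gvec {R d} A K k.
Arguments pC_smooth {R d} q beta C g.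
Arguments taylor {R d} q g u x.
Arguments vlt {R d} a b.
Arguments vle {R d} a b.
Arguments dmulti {R d} j g _.
Arguments enorm {R d} x.
Arguments evec {R d} i.
Arguments gdelta {R} A K.
Arguments Pglob {R d} A K Pk x.

(* Main.v *)
Require Import Defs.
From HB Require Import structures.
From mathcomp Require Import all_boot all_order all_algebra.
From mathcomp Require Import all_classical all_reals all_analysis.
Import Order.TTheory GRing.Theory Num.Theory.
Import numFieldNormedType.Exports.
Local Open Scope ring_scope.

From mathcomp Require Import ring.

Section S.
Variables (R : realType) (d : nat).

Lemma deriveE1 (f : 'rV[R]_d -> R) a v :
  'D_v f a = 'D_1 (fun h : R => f (h *: v + a)) 0.
Proof.
rewrite /derive; set g1 := fun h => h^-1 *: _; set g2 := fun h => h^-1 *: _.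
suff -> : g1 = g2 by [].
by rewrite funeqE /g1 /g2 => h /=; rewrite addr0 scale0r add0r [_%:A]mulr1.
Qed.

Lemma is_derive_1d (c b : R) n :
  is_derive (0:R) 1 (fun h : R => c * (h + b) ^+ n) (c * (n%:R * b ^+ n.-1)).
Proof.
have -> : (fun h : R => c * (h + b) ^+ n) = cst c * (id + cst b) ^+ n.
  by apply/funext => h; rewrite /= exprfctE.
apply: is_derive_eq.
rewrite scaler0 addr0; change ((id + cst b) 0) with (0 + b).
rewrite add0r addr0 scaler1.
by [].
Qed.

Definition Mon (j : 'I_d -> nat) (v y : 'rV[R]_d) : R :=
  \prod_k (y 0 k - v 0 k) ^+ j k.

Lemma Mon_line j v a i :
  (fun h : R => Mon j v (h *: evec i + a)) =
  fun h => (\prod_(k | k != i) (a 0 k - v 0 k) ^+ j k) *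
           (h + (a 0 i - v 0 i)) ^+ j i.
Proof.
apply/funext => h; rewrite /Mon (bigD1 i) //= mulrC; congr (_ * _).
  by apply: eq_bigr => k ki; rewrite !mxE eqxx (negbTE ki) /= mulr0 add0r.
by rewrite !mxE !eqxx /= mulr1 addrA.
Qed.

Definition dj (j : 'I_d -> nat) (i : 'I_d) : 'I_d -> nat :=
  fun k => (j k - nat_of_bool (k == i))%N.

Lemma is_derive_Mon j v a i :
  is_derive a (evec i) (Mon j v) ((j i)%:R * Mon (dj j i) v a).
Proof.
have D := is_derive_1d (\prod_(k | k != i) (a 0 k - v 0 k) ^+ j k)
   (a 0 i - v 0 i) (j i).
apply: DeriveDef.
  by apply/derivable1P; rewrite Mon_line; case: D.
rewrite deriveE1 Mon_line; case: D => _ ->.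
rewrite /Mon [in RHS](bigD1 i) //= /dj eqxx subn1 mulrCA; congr (_ * _); rewrite mulrC; congr (_ * _).
by apply: eq_bigr => k ki; rewrite (negbTE ki) subn0.
Qed.

Definition term := ((('I_d -> nat) * 'rV[R]_d) * R)%type.

Definition polyf (l : seq term) (y : 'rV[R]_d) : R :=
  \sum_(e <- l) e.2 * Mon e.1.1 e.1.2 y.

Definition dle (i : 'I_d) (e : term) : term :=
  ((dj e.1.1 i, e.1.2), e.2 * (e.1.1 i)%:R).

Lemma is_derive_polyf l a i :
  is_derive a (evec i) (polyf l) (polyf (map (dle i) l) a).
Proof.
elim: l => [|e l IH].
  have -> : polyf [::] = cst 0 by apply/funext => y; rewrite /polyf big_nil.
  exact: is_derive_cst.
have -> : polyf (e :: l) = e.2 *: Mon e.1.1 e.1.2 + polyf l.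
  by apply/funext => y; rewrite /polyf big_cons.
have := is_deriveD (is_deriveZ e.2 (is_derive_Mon e.1.1 e.1.2 a i)) IH.
move=> H; apply: is_derive_eq.
rewrite /= {2}/polyf big_cons /dle /= -/(polyf _ a).
by rewrite /GRing.scale /= mulrA [e.2 * _]mulrC.
Qed.

Lemma pderiv_polyf l i : pderiv R d i (polyf l) = polyf (map (dle i) l).
Proof. by apply/funext => a; case: (is_derive_polyf l a i). Qed.

Lemma pderivs_polyf s l :
  pderivs R d s (polyf l) = polyf (map (fun e => foldr dle e s) l).
Proof.
elim: s => [|i s IH] /=; first by rewrite map_id.
by rewrite IH pderiv_polyf -map_comp.
Qed.

Lemma derivable_pderivs_polyf s l a i :
  derivable (pderivs R d s (polyf l)) a (evec i).
Proof. by rewrite pderivs_polyf; case: (is_derive_polyf (map (fun e => foldr dle e s) l) a i). Qed.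

Definition ffc (j : 'I_d -> nat) (s : seq 'I_d) : R :=
  \prod_k ((j k) ^_ (count_mem k s))%:R.

Lemma foldr_dle e s :
  foldr dle e s =
  (((fun k => (e.1.1 k - count_mem k s)%N), e.1.2), e.2 * ffc e.1.1 s).
Proof.
elim: s => [|i s IH] /=.
  rewrite /ffc; case: e => [[j v] c] /=; congr (_, _, _).
    by apply/funext => k; rewrite subn0.
  by rewrite big1 ?mulr1 // => k _; rewrite ffactn0.
rewrite IH /dle /dj /=; congr (_, _, _).
  by apply/funext => k; rewrite -subnDA addnC eq_sym.
rewrite -mulrA; congr (_ * _); rewrite /ffc.
rewrite [in RHS](bigD1 i) //= [in LHS](bigD1 i) //= eqxx /= add1n ffactnSr.
rewrite natrM.
rewrite [X in _ = _ * X](eq_bigr (fun k => (e.1.1 k ^_ count_mem k s)%:R)).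
  by rewrite mulrAC.
by move=> k ki; rewrite eq_sym (negbTE ki).
Qed.

Lemma count_mindex (j : 'I_d -> nat) k : count_mem k (mindex_seq d j) = j k.
Proof.
rewrite /mindex_seq count_flatten -map_comp sumnE big_map big_enum /=.
rewrite (bigD1 k) //= count_nseq /= eqxx mul1n big1 ?addn0 // => i ik.
by rewrite count_nseq /= (negbTE ik).
Qed.

Lemma size_mindex (j : 'I_d -> nat) : size (mindex_seq d j) = (\sum_i j i)%N.
Proof.
rewrite /mindex_seq size_flatten /shape -map_comp sumnE big_map big_enum /=.
by apply: eq_big => // i; rewrite size_nseq.
Qed.

Lemma dmulti_polyf (j : 'I_d -> nat) l u :
  dmulti j (polyf l) u =
  \sum_(e <- l) e.2 * ((\prod_k ((e.1.1 k) ^_ (j k))%:R) *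
                       Mon (fun k => (e.1.1 k - j k)%N) e.1.2 u).
Proof.
rewrite /dmulti pderivs_polyf /polyf big_map; apply: eq_bigr => e _.
rewrite foldr_dle /= /ffc -mulrA; congr (_ * (_ * _)).
  by apply: eq_bigr => k _; rewrite count_mindex.
by rewrite /Mon; apply: eq_bigr => k _; rewrite count_mindex.
Qed.

Lemma taylor_mon (q : nat) (j : 'I_d -> nat) (v u x : 'rV[R]_d) :
  (\sum_i j i <= q)%N ->
  \sum_(k : {ffun 'I_d -> 'I_q.+1} | (\sum_i (k i : nat) <= q)%N)
    (\prod_i ((k i)`!)%:R)^-1 *
      ((\prod_i ((j i) ^_ (k i))%:R) * Mon (fun i => (j i - k i)%N) v u)
      * \prod_i (x 0 i - u 0 i) ^+ k i = Mon j v x.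
Proof.
move=> hq.
pose G i (m : nat) := ((m`!)%:R)^-1 * ((j i) ^_ m)%:R *
  (u 0 i - v 0 i) ^+ (j i - m) * (x 0 i - u 0 i) ^+ m.
transitivity (\sum_(k : {ffun 'I_d -> 'I_q.+1}) \prod_i G i (k i)).
  rewrite big_mkcond; apply: eq_bigr => k _.
  case: ifP => hk.
    by rewrite /G !big_split /= prodfV /Mon !mulrA.
  have [i lt] : exists i, (j i < k i)%N.
    apply/existsP; apply: contraFT hk => /existsPn H.
    apply: leq_trans hq; apply: leq_sum => i _; by rewrite leqNgt H.
  by rewrite (bigD1 i) //= /G ffact_small // mulr0 !mul0r.
rewrite -(bigA_distr_bigA (fun i (m : 'I_q.+1) => G i m)) /Mon; apply: eq_bigr => i _.
have ji : (j i <= q)%N.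
  by apply: leq_trans hq; rewrite (bigD1 i) //= leq_addr.
have -> : x 0 i - v 0 i = (u 0 i - v 0 i) + (x 0 i - u 0 i) by ring.
rewrite exprDn (big_ord_widen q.+1 (fun m => (u 0 i - v 0 i) ^+ (j i - m) *
   (x 0 i - u 0 i) ^+ m *+ 'C(j i, m))) // [RHS]big_mkcond.
apply: eq_bigr => m _; case: ifP => hm.
  rewrite /G -bin_ffact natrM [X in _^-1 * X]mulrC mulKf; last first.
    by rewrite pnatr_eq0 -lt0n fact_gt0.
  by rewrite -!mulrA mulr_natl.
by rewrite /G ffact_small ?mulr0 ?mul0r // ltnNge -ltnS hm.
Qed.

Lemma taylor_polyf q l u :
  all (fun e : term => (\sum_i e.1.1 i <= q)%N) l ->
  taylor q (polyf l) u = polyf l.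
Proof.
move=> hl; apply/funext => x; rewrite /taylor.
under eq_bigr => k _ do rewrite dmulti_polyf big_distrr big_distrl.
rewrite exchange_big /polyf big_seq [RHS]big_seq; apply: eq_bigr => e he.
have hq := allP hl e he.
rewrite -(taylor_mon q e.1.1 e.1.2 u x hq) big_distrr /=; apply: eq_bigr => k _.
ring.
Qed.

Definition degq (q : nat) (e : term) : bool := (\sum_i e.1.1 i <= q)%N.

Definition TL (q : nat) (h : 'rV[R]_d -> R) (u : 'rV[R]_d) : seq term :=
  map (fun k : {ffun 'I_d -> 'I_q.+1} => (((fun i => nat_of_ord (k i)), u),
        (\prod_i ((k i)`!)%:R)^-1 * dmulti (fun i => nat_of_ord (k i)) h u))
  (seq.filter (fun k : {ffun 'I_d -> 'I_q.+1} => (\sum_i (k i : nat) <= q)%N)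
     (index_enum {ffun 'I_d -> 'I_q.+1})).

Lemma taylor_TL q h u : taylor q h u = polyf (TL q h u).
Proof. by apply/funext => x; rewrite /polyf big_map big_filter /taylor. Qed.

Lemma TL_deg q h u : all (degq q) (TL q h u).
Proof. by rewrite all_map; apply/allP => k; rewrite mem_filter => /andP[hk _]. Qed.

Lemma sum_poly q (I : Type) (r : seq I) (P : pred I) (F : I -> 'rV[R]_d -> R) :
  (forall i, exists l, all (degq q) l /\ F i = polyf l) ->
  exists l, all (degq q) l /\
    (fun y => \sum_(i <- r | P i) F i y) = polyf l.
Proof.
move=> H; elim: r => [|i r [l [hl el]]].
  by exists [::]; split => //; apply/funext => y; rewrite /polyf !big_nil.
have [li [hli eli]] := H i.
case hP: (P i).
  exists (li ++ l); split; first by rewrite all_cat hli hl.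
  apply/funext => y; rewrite big_cons hP eli.
  have := congr1 (fun g => g y) el => /= ->.
  by rewrite /polyf big_cat.
exists l; split => //; apply/funext => y; rewrite big_cons hP.
exact: (congr1 (fun g => g y) el).
Qed.

Lemma pderivs_sub q f l s : q_partially_derivable R d q f -> (size s <= q)%N ->
  pderivs R d s (fun y => f y - polyf l y) =
  fun y => pderivs R d s f y - pderivs R d s (polyf l) y.
Proof.
move=> hf; elim: s => [|i s IH] hs //=.
rewrite IH ?(ltnW hs) //; apply/funext => a; rewrite /pderiv.
have -> : (fun y => pderivs R d s f y - pderivs R d s (polyf l) y) =
   pderivs R d s f - pderivs R d s (polyf l) by [].
apply: deriveB; [exact: hf | exact: derivable_pderivs_polyf].
Qed.

Lemma taylor_sub q f l u x : q_partially_derivable R d q f ->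
  taylor q (fun y => f y - polyf l y) u x =
  taylor q f u x - taylor q (polyf l) u x.
Proof.
move=> hf; rewrite /taylor -sumrB; apply: eq_bigr => k hk.
rewrite /dmulti (@pderivs_sub q f l _ hf); last by rewrite size_mindex.
by rewrite mulrBr mulrBl.
Qed.

End S.
Arguments polyf {R d}.
Arguments degq {R d}.
Arguments TL {R d}.

Section Grid.
Variables (R : realType) (d : nat) (A : R) (K : nat).
Hypothesis gd : 0 < gdelta A K.

Lemma gpt_le m n : (gpt R A K m <= gpt R A K n) = (m <= n)%N.
Proof. by rewrite /gpt lerD2l ler_pM2r // ler_nat. Qed.

Lemma gptS m : gpt R A K m.+1 = gpt R A K m + gdelta A K.
Proof. by rewrite /gpt -natr1 mulrDl mul1r addrA. Qed.

Lemma gvec_inj : injective (@gvec R d A K).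
Proof.
move=> k1 k2 e; apply/ffunP => i; apply/val_inj => /=.
have := congr1 (fun M : 'rV[R]_d => M 0 i) e; rewrite !mxE => h.
by apply/eqP; rewrite eqn_leq -!gpt_le h lexx.
Qed.

Lemma vle_gvec (k r : {ffun 'I_d -> 'I_K}) (x : 'rV[R]_d) :
  (forall i : 'I_d, gvec A K r 0 i <= x 0 i < gvec A K r 0 i + gdelta A K) ->
  vle (gvec A K k) x = [forall i, (k i <= r i)%N].
Proof.
move=> hx; apply: eq_forallb => i.
have /andP[h1 h2] := hx i; rewrite !mxE in h1 h2 *.
case: (leqP (k i) (r i)) => h.
  by apply: (le_trans _ h1); rewrite gpt_le.
apply/negbTE; rewrite -ltNge; apply: (lt_le_trans h2).
by rewrite -gptS gpt_le.
Qed.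

Lemma vle_gvec2 (k r : {ffun 'I_d -> 'I_K}) :
  vle (gvec A K k) (gvec A K r) = [forall i, (k i <= r i)%N].
Proof. by apply: eq_forallb => i; rewrite !mxE gpt_le. Qed.

End Grid.

Theorem lemma6 (R : realType) (d q : nat) (beta C A : R) (K : nat)
  (f : 'rV[R]_d -> R) (Pk : {ffun 'I_d -> 'I_K} -> 'rV[R]_d -> R)
  (r : {ffun 'I_d -> 'I_K}) (x : 'rV[R]_d) :
  0 < beta <= 1 ->
  pC_smooth q beta C f ->
  1 <= A ->
  (0 < K)%N ->
  (forall k : {ffun 'I_d -> 'I_K},
     Pk k = taylor q (fun y => f y - \sum_(l : {ffun 'I_d -> 'I_K} |
                                  vlt (gvec A K l) (gvec A K k)) Pk l y)
                     (gvec A K k)) ->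
  (forall i : 'I_d, gvec A K r 0 i <= x 0 i < gvec A K r 0 i + gdelta A K) ->
  Pglob A K Pk x = taylor q f (gvec A K r) x.
Proof.
move=> _ [hf _] hA hK hP hx.
have gd : 0 < gdelta A K.
  rewrite /gdelta divr_gt0 ?ltr0n // mulr_gt0 //.
  exact: lt_le_trans ltr01 hA.
have PkP : forall k, exists l, all (degq q) l /\ Pk k = polyf l.
  move=> k; rewrite hP; eexists; split; last exact: taylor_TL.
  exact: TL_deg.
have [lS [hlS eS]] := @sum_poly _ _ q _ (index_enum {ffun 'I_d -> 'I_K})
   (fun l => vlt (gvec A K l) (gvec A K r)) _ PkP.
have Pr : Pk r x = taylor q f (gvec A K r) x - polyf lS x.
  have E : (fun y => f y - \sum_(l | vlt (gvec A K l) (gvec A K r)) Pk l y) =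
     (fun y => f y - polyf lS y).
    by apply/funext => y; have := congr1 (fun g => g y) eS => /= ->.
  rewrite hP E (@taylor_sub _ _ q f lS _ _ hf) (@taylor_polyf _ _ q lS _ hlS) //.
rewrite /Pglob -big_mkcond /= (bigD1 r) /=; last first.
  by rewrite (@vle_gvec _ _ A K gd r r x hx); apply/forallP => i.
have -> : \sum_(k | vle (gvec A K k) x && (k != r)) Pk k x = polyf lS x.
  have := congr1 (fun g => g x) eS => /= <-; apply: eq_bigl => k.
  rewrite /vlt (@vle_gvec _ _ A K gd k r x hx) (@vle_gvec2 _ _ A K gd); congr andb.
  apply/idP/idP; apply: contra => /eqP H; apply/eqP; last by rewrite H.
  exact: (@gvec_inj _ _ A K gd).
by rewrite Pr subrK.
Qed.
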